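(* Let $C_1=(S_1,E_1)$ and $C_2=(S_2,E_2)$ be two chains of points in the plane that are separated by a straight line, such that $S_1\cup S_2$ is in convex position and each of $C_1$, $C_2$ is a convex chain, i.e. its vertices appear along it in the order in which they appear on the boundary of the convex hull of $S_1\cup S_2$. Let $\tau\geq 1$ be a real number such that each of $C_1$ and $C_2$ has stretch factor at most $\tau$. Let $E$ be the set of edges returned by the algorithm $\textsc{Matching}(C_1,C_2)$. Then the graph $G=(S_1\cup S_2,\,E_1\cup E_2\cup E)$ is a plane $(2\tau+1)$-spanner for $S_1\cup S_2$ in which each endpoint of $C_1$ and of $C_2$ has degree at most $2$ and every other vertex has degree at most $3$.
   Context: A chain is a sequence of points together with the line segments connecting consecutive points; its vertex set and edge set are $S_i$ and $E_i$. A geometric graph $G$ on a point set has straight-segment edges, each weighted by its Euclidean length; $d_G(u,v)$ is the length of a shortest path between $u$ and $v$ in $G$. $G$ is a $t$-spanner of its vertex set if $d_G(u,v)\le t|uv|$ for all vertices $u,v$; the stretch factor of $G$ (in particular of a chain) is the smallest such $t$. $G$ is plane if no two edges cross. Algorithm $\textsc{Matching}(C_1,C_2)$: if $C_1$ or $C_2$ has no vertices, return $\emptyset$. Otherwise let $(a,b)$, $a\in C_1$, $b\in C_2$, be a pair of vertices minimizing $|ab|$ over all such pairs; removing $a$ from $C_1$ splits it into two sub-chains $C_1',C_1''$, and removing $b$ from $C_2$ splits it into $C_2',C_2''$, where $C_1'$ and $C_2'$ lie on the same side of the line through $a$ and $b$, and $C_1'',C_2''$ on the other side; return $\{ab\}\cup\textsc{Matching}(C_1',C_2')\cup\textsc{Matching}(C_1'',C_2'')$.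 *)

(* Defs.v *)
From HB Require Import structures.
From mathcomp Require Import all_boot all_order all_algebra.
Set Implicit Arguments. Unset Strict Implicit. Unset Printing Implicit Defensive.
Import Order.TTheory GRing.Theory Num.Theory.
Local Open Scope ring_scope.

Section Geometry.
Variable R : rcfType.

Definition pt := (R * R)%type.

Definition dist (p q : pt) : R :=
  Num.sqrt ((p.1 - q.1) ^+ 2 + (p.2 - q.2) ^+ 2).

(* orientation: > 0 iff p lies strictly to the left of the directed line a -> b *)
Definition orient (a b p : pt) : R :=
  (b.1 - a.1) * (p.2 - a.2) - (b.2 - a.2) * (p.1 - a.1).

Definition chain_edges (s : seq pt) : seq (pt * pt) := zip s (behead s).

Definition adj (Es : seq (pt * pt)) (u v : pt) : bool :=
  ((u, v) \in Es) || ((v, u) \in Es).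

Definition walk_len (u : pt) (p : seq pt) : R :=
  \sum_(e <- zip (u :: p) p) dist e.1 e.2.

Definition is_spanner (V : seq pt) (Es : seq (pt * pt)) (t : R) : Prop :=
  forall u v, u \in V -> v \in V ->
    exists p : seq pt, [/\ path (adj Es) u p, last u p = v &
                           walk_len u p <= t * dist u v].

Definition on_seg (x : pt) (e : pt * pt) : Prop :=
  exists l : R, [/\ 0 <= l, l <= 1,
     x.1 = e.1.1 + l * (e.2.1 - e.1.1) & x.2 = e.1.2 + l * (e.2.2 - e.1.2)].

Definition same_edge (e f : pt * pt) : Prop := e = f \/ e = (f.2, f.1).

Definition plane (Es : seq (pt * pt)) : Prop :=
  forall e f, e \in Es -> f \in Es -> ~ same_edge e f ->
    forall x, on_seg x e -> on_seg x f ->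
      ((x == e.1) || (x == e.2)) && ((x == f.1) || (x == f.2)).

Definition degree (V : seq pt) (Es : seq (pt * pt)) (v : pt) : nat :=
  count (fun u => (u != v) && adj Es u v) (undup V).

(* L lists the vertices of a convex polygon in counterclockwise order, each
   point being a (strict) vertex: every other point lies strictly to the left
   of each boundary edge x -> next L x *)
Definition convex_cycle (L : seq pt) : Prop :=
  forall x p, x \in L -> p \in L -> p != x -> p != next L x ->
    0 < orient x (next L x) p.

Definition convex_position (S : seq pt) : Prop :=
  exists L, perm_eq L S /\ convex_cycle L.

(* C is a convex chain w.r.t. S: its vertices appear along C in the order in
   which they appear on the boundary of the convex hull of S (a contiguous arc
   of the cyclic boundary order, traversed in either direction) *)
Definition convex_chain (C S : seq pt) : Prop :=
  exists L, [/\ perm_eq L S, convex_cycle L &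
                infix C (L ++ L) || infix (rev C) (L ++ L)].

Definition separated (S1 S2 : seq pt) : Prop :=
  exists a b c : R, (a != 0) || (b != 0) /\
    (forall p, p \in S1 -> 0 < a * p.1 + b * p.2 + c) /\
    (forall p, p \in S2 -> a * p.1 + b * p.2 + c < 0).

(* matching C1 C2 E : E is a possible output of Matching(C1, C2) (any choice
   of a closest pair in case of ties). *)
Inductive matching : seq pt -> seq pt -> seq (pt * pt) -> Prop :=
| matching_nil1 C2 : matching [::] C2 [::]
| matching_nil2 C1 : matching C1 [::] [::]
| matching_step P1 a Q1 P2 b Q2 X1 Y1 X2 Y2 E' E'' :
    (forall x y, x \in P1 ++ a :: Q1 -> y \in P2 ++ b :: Q2 ->
       dist a b <= dist x y) ->
    ((X1, Y1) = (P1, Q1) \/ (X1, Y1) = (Q1, P1)) ->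
    ((X2, Y2) = (P2, Q2) \/ (X2, Y2) = (Q2, P2)) ->
    (forall p, p \in X1 ++ X2 -> 0 < orient a b p) ->
    (forall p, p \in Y1 ++ Y2 -> orient a b p < 0) ->
    matching X1 X2 E' -> matching Y1 Y2 E'' ->
    matching (P1 ++ a :: Q1) (P2 ++ b :: Q2) ((a, b) :: E' ++ E'').

Definition is_endpoint (C : seq pt) (v : pt) : bool :=
  (C != [::]) && ((v == head v C) || (v == last v C)).

End Geometry.

(* Main.v *)
Require Import Defs.
From HB Require Import structures.
From mathcomp Require Import all_boot all_order all_algebra ring lra zify.
From Stdlib Require Classical_Prop.
Import Order.TTheory GRing.Theory Num.Theory.
Local Open Scope ring_scope.
Set Implicit Arguments. Unset Strict Implicit. Unset Printing Implicit Defensive.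

Section G.
Variable R : rcfType.
Implicit Types (a b u v w x y z p q r : pt R).

Lemma pt_eq p q : p.1 = q.1 -> p.2 = q.2 -> p = q.
Proof. by case: p => ??; case: q => ?? /= -> ->. Qed.

Lemma dist_sym p q : dist p q = dist q p.
Proof. by rewrite /dist; congr Num.sqrt; ring. Qed.

Lemma dist_ge0 p q : 0 <= dist p q.
Proof. exact: sqrtr_ge0. Qed.

Lemma dist0 p : dist p p = 0.
Proof. by rewrite /dist !subrr expr0n /= addr0 sqrtr0. Qed.

Lemma tri_aux (x1 y1 x2 y2 : R) :
  Num.sqrt ((x1+x2)^+2+(y1+y2)^+2) <=
  Num.sqrt (x1^+2+y1^+2) + Num.sqrt (x2^+2+y2^+2).
Proof.
set A := Num.sqrt (x1^+2+y1^+2); set B := Num.sqrt (x2^+2+y2^+2).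
have hA : 0 <= A by apply: sqrtr_ge0.
have hB : 0 <= B by apply: sqrtr_ge0.
have hA2 : A^+2 = x1^+2+y1^+2 by rewrite sqr_sqrtr // addr_ge0 // sqr_ge0.
have hB2 : B^+2 = x2^+2+y2^+2 by rewrite sqr_sqrtr // addr_ge0 // sqr_ge0.
have hAB : x1*x2+y1*y2 <= A*B.
  apply: (le_trans (ler_norm _)).
  rewrite -sqrtr_sqr /A /B -sqrtrM; last by rewrite addr_ge0 // sqr_ge0.
  apply: ler_wsqrtr; rewrite -subr_ge0.
  have -> : (x1 ^+ 2 + y1 ^+ 2) * (x2 ^+ 2 + y2 ^+ 2) - (x1 * x2 + y1 * y2) ^+ 2
     = (x1*y2 - x2*y1)^+2 by ring.
  exact: sqr_ge0.
have -> : A + B = Num.sqrt ((A+B)^+2) by rewrite sqrtr_sqr ger0_norm // addr_ge0.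
apply: ler_wsqrtr; nra.
Qed.

Lemma dist_tri p q r : dist p r <= dist p q + dist q r.
Proof.
rewrite /dist.
have := tri_aux (p.1 - q.1) (p.2 - q.2) (q.1 - r.1) (q.2 - r.2).
by rewrite !addrA !subrK.
Qed.

Lemma seg_dist p q x (s : R) : 0 <= s -> s <= 1 ->
  x.1 = p.1 + s * (q.1 - p.1) -> x.2 = p.2 + s * (q.2 - p.2) ->
  dist p x + dist x q = dist p q.
Proof.
move=> s0 s1 e1 e2; rewrite /dist e1 e2.
set D := (p.1 - q.1)^+2 + (p.2 - q.2)^+2.
have hD : 0 <= D by rewrite addr_ge0 // sqr_ge0.
have -> : (p.1 - (p.1 + s * (q.1 - p.1))) ^+ 2 + (p.2 - (p.2 + s * (q.2 - p.2))) ^+ 2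
   = s^+2 * D by rewrite /D; ring.
have -> : (p.1 + s * (q.1 - p.1) - q.1) ^+ 2 + (p.2 + s * (q.2 - p.2) - q.2) ^+ 2
   = (1 - s)^+2 * D by rewrite /D; ring.
rewrite (sqrtrM D (sqr_ge0 s)) (sqrtrM D (sqr_ge0 (1 - s))) !sqrtr_sqr.
rewrite !ger0_norm ?subr_ge0 //; ring.
Qed.

Lemma orient_aff a b p q x (l : R) :
  x.1 = p.1 + l * (q.1 - p.1) -> x.2 = p.2 + l * (q.2 - p.2) ->
  orient a b x = (1 - l) * orient a b p + l * orient a b q.
Proof. by move=> e1 e2; rewrite /orient e1 e2; ring. Qed.

Lemma orient_l a b : orient a b a = 0.
Proof. by rewrite /orient; ring. Qed.
Lemma orient_r a b : orient a b b = 0.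
Proof. by rewrite /orient; ring. Qed.
Lemma orient_sw a b p : orient b a p = - orient a b p.
Proof. by rewrite /orient; ring. Qed.
Lemma orient_aa a p : orient a a p = 0.
Proof. by rewrite /orient; ring. Qed.

Lemma on_seg_sym x p q : on_seg x (p, q) -> on_seg x (q, p).
Proof.
case=> l [l0 l1 e1 e2]; exists (1 - l); split => //=.
- by rewrite subr_ge0.
- by rewrite lerBlDr lerDl.
- by rewrite e1 /=; ring.
- by rewrite e2 /=; ring.
Qed.


Lemma hull_pos L x p : convex_cycle L -> x \in L -> p \in L ->
  p = x \/ p = next L x \/ 0 < orient x (next L x) p.
Proof.
move=> HL xL pL; case: (eqVneq p x) => [->|h1]; first by left.
case: (eqVneq p (next L x)) => [->|h2]; first by right; left.
by right; right; apply: HL.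
Qed.

Lemma no_inside L b a u v (la lu lv : R) : convex_cycle L ->
  b \in L -> a \in L -> u \in L -> v \in L -> b != a -> b != u -> b != v ->
  0 <= la -> 0 <= lu -> 0 <= lv -> 0 < la + lu + lv ->
  (la + lu + lv) * b.1 = la * a.1 + lu * u.1 + lv * v.1 ->
  (la + lu + lv) * b.2 = la * a.2 + lu * u.2 + lv * v.2 -> False.
Proof.
move=> HL bL aL uL vL ba bu bv la0 lu0 lv0 W0 e1 e2.
set n := next L b.
have key : forall y (l : R), y \in L -> b != y -> 0 <= l ->
   0 <= l * orient b n y /\ (l * orient b n y = 0 -> l * (y.1 - n.1) = 0 /\ l * (y.2 - n.2) = 0).
  move=> y l yL hby l0; case: (hull_pos HL bL yL) => [yb|[yn|yp]].
  - by rewrite yb eqxx in hby.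
  - by rewrite yn; split=> [|_]; [rewrite orient_r mulr0|rewrite !subrr mulr0].
  - split; first by apply: mulr_ge0 => //; apply: ltW.
    move=> h; have l00 : l = 0.
      by apply/eqP; move: h => /eqP; rewrite mulf_eq0 => /orP [//|/eqP h']; move: yp; rewrite h' ltxx.
    by rewrite l00 !mul0r.
have sum0 : la * orient b n a + lu * orient b n u + lv * orient b n v = 0.
  have -> : la * orient b n a + lu * orient b n u + lv * orient b n v =
    (n.1 - b.1) * ((la * a.2 + lu * u.2 + lv * v.2) - (la + lu + lv) * b.2)
    - (n.2 - b.2) * ((la * a.1 + lu * u.1 + lv * v.1) - (la + lu + lv) * b.1)
    by rewrite /orient; ring.
  by rewrite -e1 -e2 !subrr !mulr0 subrr.
have [ka ka'] := key a la aL ba la0.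
have [ku ku'] := key u lu uL bu lu0.
have [kv kv'] := key v lv vL bv lv0.
have [a1 a2] : la * (a.1 - n.1) = 0 /\ la * (a.2 - n.2) = 0 by apply: ka'; lra.
have [u1 u2] : lu * (u.1 - n.1) = 0 /\ lu * (u.2 - n.2) = 0 by apply: ku'; lra.
have [v1 v2] : lv * (v.1 - n.1) = 0 /\ lv * (v.2 - n.2) = 0 by apply: kv'; lra.
have hb1 : b.1 = n.1.
  have : (la + lu + lv) * (b.1 - n.1) = 0.
    have -> : (la + lu + lv) * (b.1 - n.1) = (la + lu + lv) * b.1 - (la + lu + lv) * n.1 by ring.
    rewrite e1; lra.
  move/eqP; rewrite mulf_eq0 => /orP [/eqP h|]; first by move: W0; rewrite h ltxx.
  by rewrite subr_eq0 => /eqP.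
have hb2 : b.2 = n.2.
  have : (la + lu + lv) * (b.2 - n.2) = 0.
    have -> : (la + lu + lv) * (b.2 - n.2) = (la + lu + lv) * b.2 - (la + lu + lv) * n.2 by ring.
    rewrite e2; lra.
  move/eqP; rewrite mulf_eq0 => /orP [/eqP h|]; first by move: W0; rewrite h ltxx.
  by rewrite subr_eq0 => /eqP.
have bn : n = b by apply: pt_eq.
case: (hull_pos HL bL aL) => [ab|[an|ap]].
- by rewrite ab eqxx in ba.
- by rewrite an -/n bn eqxx in ba.
- by move: ap; rewrite -/n bn orient_aa ltxx.
Qed.

Lemma zip_rel (e : rel (pt R)) x s p q : path e x s -> (p, q) \in zip (x :: s) s -> e p q.
Proof.
elim: s x => [|y s IH] x //= /andP [exy pys]; rewrite inE => /orP [/eqP [-> ->] //|].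
exact: IH.
Qed.

Lemma zip_mem x s p q : (p, q) \in zip (x :: s) s -> p \in x :: s /\ q \in s.
Proof.
elim: s x => [|y s IH] x //=; rewrite inE => /orP [/eqP [-> ->]|/IH [h1 h2]].
  by rewrite !inE !eqxx ?orbT.
by split; rewrite inE ?h1 ?h2 ?orbT.
Qed.

Lemma zip_neq x s p q : uniq (x :: s) -> (p, q) \in zip (x :: s) s -> p != q.
Proof.
elim: s x => [|y s IH] x //= /andP [xn uys]; rewrite inE => /orP [/eqP [-> ->]|h].
  by apply/eqP => exy; rewrite exy inE eqxx in xn.
exact: (IH y uys h).
Qed.

Lemma chain_mem S p q : (p, q) \in chain_edges S -> p \in S /\ q \in S.
Proof.
case: S => [|x s] //= /zip_mem [h1 h2]; split=> //; by rewrite inE h2 orbT.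
Qed.

Lemma chain_neq S p q : uniq S -> (p, q) \in chain_edges S -> p != q.
Proof. case: S => [|x s] //=; exact: zip_neq. Qed.

Lemma sorted_LL L : uniq L -> sorted (fun x y => next L x == y) (L ++ L).
Proof.
move=> uL; have := cycle_next uL.
case: L uL => [|x c] //= _.
rewrite -cat_rcons cat_path last_rcons => h; rewrite h /=.
by move: h; rewrite rcons_path => /andP [].
Qed.

Lemma chain_hull L S p q : uniq L -> infix S (L ++ L) || infix (rev S) (L ++ L) ->
  (p, q) \in chain_edges S -> q = next L p \/ p = next L q.
Proof.
move=> uL /orP [h|h] hpq.
- have sS := infix_sorted h (sorted_LL uL).
  case: S sS hpq {h} => [|x s] //= sS hpq.
  by left; apply/esym/eqP; apply: (zip_rel sS hpq).
- have := infix_sorted h (sorted_LL uL); rewrite rev_sorted => sS.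
  case: S sS hpq {h} => [|x s] //= sS hpq.
  by right; apply/esym/eqP; apply: (zip_rel sS hpq).
Qed.

Lemma hull_ok L x y z w : convex_cycle L -> x \in L -> y \in L -> z \in L ->
  y != z -> ~ ((y = x /\ z = next L x) \/ (y = next L x /\ z = x)) ->
  on_seg w (x, next L x) -> on_seg w (y, z) ->
  ((w == x) || (w == next L x)) && ((w == y) || (w == z)).
Proof.
move=> HL xL yL zL yz nsame [l0 [l00 l01 f1 f2]] [l [l0' l1 g1 g2]].
set n := next L x in nsame f1 f2 *; simpl in *.
have Ow : orient x n w = 0 by rewrite (orient_aff x n f1 f2) orient_l orient_r; ring.
have Ow' := orient_aff x n g1 g2.
rewrite Ow in Ow'.
have hy := hull_pos HL xL yL; have hz := hull_pos HL xL zL; rewrite -/n in hy hz.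
have onx : orient x n x = 0 by apply: orient_l.
have onn : orient x n n = 0 by apply: orient_r.
case: hy => [yx|[yn|yp]]; case: hz => [zx|[zn|zp]].
- by move: yz; rewrite yx zx eqxx.
- by exfalso; apply: nsame; left.
-
  have l0e : l = 0 by move: Ow'; rewrite yx onx; nra.
  have wy : w = y by apply: pt_eq; rewrite ?g1 ?g2 l0e; ring.
  by rewrite wy yx !eqxx.
- by exfalso; apply: nsame; right.
- by move: yz; rewrite yn zn eqxx.
- have l0e : l = 0 by move: Ow'; rewrite yn onn; nra.
  have wy : w = y by apply: pt_eq; rewrite ?g1 ?g2 l0e; ring.
  by rewrite wy yn !eqxx orbT.
- have l1e : l = 1 by move: Ow'; rewrite zx onx; nra.
  have wz : w = z by apply: pt_eq; rewrite ?g1 ?g2 l1e; ring.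
  by rewrite wz zx !eqxx orbT.
- have l1e : l = 1 by move: Ow'; rewrite zn onn; nra.
  have wz : w = z by apply: pt_eq; rewrite ?g1 ?g2 l1e; ring.
  by rewrite wz zn !eqxx !orbT.
- exfalso; nra.
Qed.


Lemma I1x a b u v :
  (orient u v a - orient u v b) * (orient a b u * v.1 - orient a b v * u.1)
  = (orient a b u - orient a b v) * (orient u v a * b.1 - orient u v b * a.1).
Proof. case: a => a1 a2; case: b=> b1 b2; case: u => u1 u2; case: v => v1 v2. rewrite /orient /=; ring. Qed.
Lemma I1y a b u v :
  (orient u v a - orient u v b) * (orient a b u * v.2 - orient a b v * u.2)
  = (orient a b u - orient a b v) * (orient u v a * b.2 - orient u v b * a.2).
Proof. case: a => a1 a2; case: b=> b1 b2; case: u => u1 u2; case: v => v1 v2. rewrite /orient /=; ring. Qed.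
Lemma I2 a b u v :
  orient a b u * ((v.1-u.1)^+2 + (v.2-u.2)^+2) =
  orient u v b * ((a.1-u.1)*(v.1-u.1)+(a.2-u.2)*(v.2-u.2)) - orient u v a * ((b.1-u.1)*(v.1-u.1) + (b.2-u.2)*(v.2-u.2)).
Proof. case: a => a1 a2; case: b=> b1 b2; case: u => u1 u2; case: v => v1 v2. rewrite /orient /=; ring. Qed.

Lemma alg1 (o1 o2 p q a1 b1 u1 v1 : R) : o1 - o2 != 0 -> p - q != 0 ->
  (p - q) * (o1 * v1 - o2 * u1) = (o1 - o2) * (p * b1 - q * a1) ->
  u1 + o1 / (o1 - o2) * (v1 - u1) = a1 + p / (p - q) * (b1 - a1).
Proof.
move=> h1 h2 H.
have E : (o1 - o2) * (p - q) * (u1 + o1 / (o1 - o2) * (v1 - u1) - (a1 + p / (p - q) * (b1 - a1)))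
   = (p - q) * (o1 * v1 - o2 * u1) - (o1 - o2) * (p * b1 - q * a1).
  by field; rewrite h1 h2.
move: E; rewrite H subrr => /eqP; rewrite !mulf_eq0 (negbTE h1) (negbTE h2) /= subr_eq0.
by move/eqP.
Qed.

Lemma neq_pt_D u v : u != v -> 0 < (v.1-u.1)^+2 + (v.2-u.2)^+2.
Proof.
move=> uv; rewrite lt_def addr_ge0 ?sqr_ge0 // andbT.
apply: contra uv => /eqP h.
have h1 : (v.1 - u.1)^+2 = 0 by have := sqr_ge0 (v.1-u.1); have := sqr_ge0 (v.2-u.2); lra.
have h2 : (v.2 - u.2)^+2 = 0 by have := sqr_ge0 (v.1-u.1); have := sqr_ge0 (v.2-u.2); lra.
move/eqP: h1; rewrite sqrf_eq0 subr_eq0 => /eqP h1.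
move/eqP: h2; rewrite sqrf_eq0 subr_eq0 => /eqP h2.
by apply/eqP/pt_eq.
Qed.

Lemma crossing L a b u v : convex_cycle L ->
  a \in L -> b \in L -> u \in L -> v \in L ->
  0 < orient a b u -> orient a b v < 0 ->
  dist u a + dist b v <= dist a b + dist u v /\
  dist u b + dist a v <= dist a b + dist u v.
Proof.
move=> HL aL bL uL vL h1 h2.
set o1 := orient a b u in h1 *; set o2 := orient a b v in h2 *.
set p := orient u v a; set q := orient u v b.
have au : a != u by apply/eqP => e; move: h1; rewrite /o1 -e orient_l ltxx.
have bu : b != u by apply/eqP => e; move: h1; rewrite /o1 -e orient_r ltxx.
have av : a != v by apply/eqP => e; move: h2; rewrite /o2 -e orient_l ltxx.
have bv : b != v by apply/eqP => e; move: h2; rewrite /o2 -e orient_r ltxx.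
have uv : u != v by apply/eqP => e; move: h1 h2; rewrite /o1 /o2 e; lra.
have ab : a != b by apply/eqP => e; move: h1; rewrite /o1 e orient_aa ltxx.
have ex1 := I1x a b u v; have ey1 := I1y a b u v; rewrite -/o1 -/o2 -/p -/q in ex1 ey1.
have o12 : o1 - o2 != 0 by rewrite subr_eq0; apply/eqP => e; lra.
case: (lerP (p * q) 0) => pq.
- have pq0 : p - q != 0.
    rewrite subr_eq0; apply/eqP => e.
    have p0 : p = 0 by rewrite e in pq; nra.
    have q0 : q = 0 by rewrite -e.
    have := I2 a b u v; rewrite -/o1 -/p -/q p0 q0 !mul0r subrr.
    move=> /eqP; rewrite mulf_eq0 => /orP [/eqP|/eqP]; first by lra.
    by have := neq_pt_D uv; move=> h /esym he; rewrite he ltxx in h.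
  set s := o1 / (o1 - o2); set t := p / (p - q).
  have hs : s * (o1 - o2) = o1 by rewrite /s mulrVK ?unitfE.
  have ht : t * (p - q) = p by rewrite /t mulrVK ?unitfE.
  have s0 : 0 <= s by nra.
  have s1 : s <= 1 by nra.
  have [t0 t1] : 0 <= t /\ t <= 1.
    case: (ltrP 0 (p - q)) => hpq.
      have p0 : 0 <= p by nra.
      have q0 : q <= 0 by nra.
      split; nra.
    have hpq' : p - q < 0 by rewrite lt_def hpq andbT eq_sym.
    have p0 : p <= 0 by nra.
    have q0 : 0 <= q by nra.
    split; nra.
  set x := (u.1 + s * (v.1 - u.1), u.2 + s * (v.2 - u.2)).
  have d1 : dist u x + dist x v = dist u v by apply: (seg_dist s0 s1).
  have d2 : dist a x + dist x b = dist a b.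
    apply: (seg_dist t0 t1); rewrite /x /s /t /=; exact: alg1.
  have t1' := dist_tri u x a; have t2' := dist_tri b x v.
  have t3' := dist_tri u x b; have t4' := dist_tri a x v.
  rewrite (dist_sym x a) in t1'; rewrite (dist_sym b x) in t2' t3'.
  split; lra.
- exfalso.
  have o12p : 0 < o1 - o2 by lra.
  case: (ltrP 0 ((p - q) * p)) => hp.
  + refine (@no_inside L b a u v ((o1 - o2) * p * q) (- ((p - q) * p * o2)) ((p - q) * p * o1) HL bL aL uL vL _ bu bv _ _ _ _ _ _).
    * by rewrite eq_sym.
    * nra.
    * nra.
    * nra.
    * have -> : (o1 - o2) * p * q + - ((p - q) * p * o2) + (p - q) * p * o1 = (o1 - o2) * (p * p) by ring.
      apply: mulr_gt0 => //; nra.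
    * apply/eqP; rewrite -subr_eq0; apply/eqP.
      have -> : ((o1 - o2) * p * q + - ((p - q) * p * o2) + (p - q) * p * o1) * b.1 -
        ((o1 - o2) * p * q * a.1 + - ((p - q) * p * o2) * u.1 + (p - q) * p * o1 * v.1)
        = - p * ((p - q) * (o1 * v.1 - o2 * u.1) - (o1 - o2) * (p * b.1 - q * a.1)) by ring.
      by rewrite ex1 subrr mulr0.
    * apply/eqP; rewrite -subr_eq0; apply/eqP.
      have -> : ((o1 - o2) * p * q + - ((p - q) * p * o2) + (p - q) * p * o1) * b.2 -
        ((o1 - o2) * p * q * a.2 + - ((p - q) * p * o2) * u.2 + (p - q) * p * o1 * v.2)
        = - p * ((p - q) * (o1 * v.2 - o2 * u.2) - (o1 - o2) * (p * b.2 - q * a.2)) by ring.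
      by rewrite ey1 subrr mulr0.
  + have hqq : 0 <= (q - p) * q.
      have pp : 0 < p * p by nra.
      rewrite -(pmulr_lge0 _ pp).
      have -> : ((q - p) * q) * (p * p) = (p * q - p * p) * (p * q) by ring.
      apply: mulr_ge0; nra.
    refine (@no_inside L a b u v ((o1 - o2) * p * q) (- ((q - p) * q * o2)) ((q - p) * q * o1) HL aL bL uL vL ab au av _ _ _ _ _ _).
    * nra.
    * nra.
    * nra.
    * have -> : (o1 - o2) * p * q + - ((q - p) * q * o2) + (q - p) * q * o1 = (o1 - o2) * (q * q) by ring.
      apply: mulr_gt0 => //; nra.
    * apply/eqP; rewrite -subr_eq0; apply/eqP.
      have -> : ((o1 - o2) * p * q + - ((q - p) * q * o2) + (q - p) * q * o1) * a.1 -
        ((o1 - o2) * p * q * b.1 + - ((q - p) * q * o2) * u.1 + (q - p) * q * o1 * v.1)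
        = q * ((p - q) * (o1 * v.1 - o2 * u.1) - (o1 - o2) * (p * b.1 - q * a.1)) by ring.
      by rewrite ex1 subrr mulr0.
    * apply/eqP; rewrite -subr_eq0; apply/eqP.
      have -> : ((o1 - o2) * p * q + - ((q - p) * q * o2) + (q - p) * q * o1) * a.2 -
        ((o1 - o2) * p * q * b.2 + - ((q - p) * q * o2) * u.2 + (q - p) * q * o1 * v.2)
        = q * ((p - q) * (o1 * v.2 - o2 * u.2) - (o1 - o2) * (p * b.2 - q * a.2)) by ring.
      by rewrite ey1 subrr mulr0.
Qed.


Lemma seg_orient a b f x : on_seg x f ->
  exists l : R, [/\ 0 <= l, l <= 1 &
    orient a b x = (1 - l) * orient a b f.1 + l * orient a b f.2].
Proof. case=> l [l0 l1 e1 e2]; exists l; split => //; exact: orient_aff. Qed.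

Lemma seg_pos a b f x : 0 < orient a b f.1 -> 0 < orient a b f.2 -> on_seg x f -> 0 < orient a b x.
Proof. move=> h1 h2 /(seg_orient a b) [l [l0 l1 ->]]; nra. Qed.
Lemma seg_neg a b f x : orient a b f.1 < 0 -> orient a b f.2 < 0 -> on_seg x f -> orient a b x < 0.
Proof. move=> h1 h2 /(seg_orient a b) [l [l0 l1 ->]]; nra. Qed.
Lemma seg_zero a b x : on_seg x (a, b) -> orient a b x = 0.
Proof. move=> /(seg_orient a b) [l [l0 l1 ->]] /=; rewrite orient_l orient_r; ring. Qed.

Definition pos_e a b (f : pt R * pt R) := 0 < orient a b f.1 /\ 0 < orient a b f.2.
Definition neg_e a b (f : pt R * pt R) := orient a b f.1 < 0 /\ orient a b f.2 < 0.

Lemma match_props C1 C2 E : matching C1 C2 E ->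
 [/\ (forall e, e \in E -> e.1 \in C1 /\ e.2 \in C2),
     (forall e f, e \in E -> f \in E -> (e.1 = f.1 \/ e.2 = f.2) -> e = f) &
     (forall e f x, e \in E -> f \in E -> e <> f -> on_seg x e -> on_seg x f -> False)].
Proof.
elim=> [C2'|C1'|P1 a Q1 P2 b Q2 X1 Y1 X2 Y2 E' E'' Hmin HX1 HX2 Hpos Hneg _ [IHm1 IHu1 IHp1] _ [IHm2 IHu2 IHp2]] //.
have sX1 : {subset X1 <= P1 ++ a :: Q1}.
  by case: HX1 => -[-> _] x; rewrite !mem_cat inE => ->; rewrite ?orbT.
have sY1 : {subset Y1 <= P1 ++ a :: Q1}.
  by case: HX1 => -[_ ->] x; rewrite !mem_cat inE => ->; rewrite ?orbT.
have sX2 : {subset X2 <= P2 ++ b :: Q2}.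
  by case: HX2 => -[-> _] x; rewrite !mem_cat inE => ->; rewrite ?orbT.
have sY2 : {subset Y2 <= P2 ++ b :: Q2}.
  by case: HX2 => -[_ ->] x; rewrite !mem_cat inE => ->; rewrite ?orbT.
have cls : forall g, g \in (a, b) :: E' ++ E'' ->
   g = (a, b) \/ (g \in E' /\ pos_e a b g) \/ (g \in E'' /\ neg_e a b g).
  move=> g; rewrite inE mem_cat => /orP [/eqP ->|/orP [h|h]]; [by left| right; left | right; right].
  - have [h1 h2] := IHm1 g h; split => //; split; apply: Hpos; rewrite mem_cat ?h1 ?h2 ?orbT //.
  - have [h1 h2] := IHm2 g h; split => //; split; apply: Hneg; rewrite mem_cat ?h1 ?h2 ?orbT //.
split.
- move=> e /cls [->|[[h _]|[h _]]] /=.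
  + by rewrite !mem_cat !inE !eqxx !orbT.
  + by have [h1 h2] := IHm1 e h; split; [apply: sX1|apply: sX2].
  + by have [h1 h2] := IHm2 e h; split; [apply: sY1|apply: sY2].
- move=> e f /cls ce /cls cf.
  have key : forall g1 g2 : pt R, g1 = g2 -> orient a b g1 = orient a b g2 by move=> ?? ->.
  case: ce => [->|[[eE [pe1 pe2]]|[eE [pe1 pe2]]]]; case: cf => [->|[[fE [pf1 pf2]]|[fE [pf1 pf2]]]] //=.
  + by move=> [/key h|/key h]; move: h; rewrite ?orient_l ?orient_r => h; exfalso; clear -h pf1 pf2; lra.
  + by move=> [/key h|/key h]; move: h; rewrite ?orient_l ?orient_r => h; exfalso; clear -h pf1 pf2; lra.
  + by move=> [/key h|/key h]; move: h; rewrite ?orient_l ?orient_r => h; exfalso; clear -h pe1 pe2; lra.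
  + exact: IHu1.
  + by move=> [/key h|/key h]; move: h; rewrite ?orient_l ?orient_r => h; exfalso; clear -h pe1 pe2 pf1 pf2; lra.
  + by move=> [/key h|/key h]; move: h; rewrite ?orient_l ?orient_r => h; exfalso; clear -h pe1 pe2; lra.
  + by move=> [/key h|/key h]; move: h; rewrite ?orient_l ?orient_r => h; exfalso; clear -h pe1 pe2 pf1 pf2; lra.
  + exact: IHu2.
- move=> e f x /cls ce /cls cf.
  case: ce => [->|[[eE pe]|[eE pe]]]; case: cf => [->|[[fE pf]|[fE pf]]] /= nef;
    try by exfalso; apply: nef.
  + by move=> /seg_zero h1 /(seg_pos pf.1 pf.2) h2; exfalso; clear -h1 h2; lra.
  + by move=> /seg_zero h1 /(seg_neg pf.1 pf.2) h2; exfalso; clear -h1 h2; lra.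
  + by move=> /(seg_pos pe.1 pe.2) h1 /seg_zero h2; exfalso; clear -h1 h2; lra.
  + exact: IHp1 eE fE nef.
  + by move=> /(seg_pos pe.1 pe.2) h1 /(seg_neg pf.1 pf.2) h2; exfalso; clear -h1 h2; lra.
  + by move=> /(seg_neg pe.1 pe.2) h1 /seg_zero h2; exfalso; clear -h1 h2; lra.
  + by move=> /(seg_neg pe.1 pe.2) h1 /(seg_pos pf.1 pf.2) h2; exfalso; clear -h1 h2; lra.
  + exact: IHp2 eE fE nef.
Qed.


Lemma split_mem (P Q X Y : seq (pt R)) a u : ((X, Y) = (P, Q) \/ (X, Y) = (Q, P)) ->
  u \in P ++ a :: Q -> u = a \/ u \in X \/ u \in Y.
Proof.
move=> H; rewrite mem_cat inE => /orP [h|/orP [/eqP h|h]]; [right|by left|right].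
- by case: H => -[-> ->]; [left|right].
- by case: H => -[-> ->]; [right|left].
Qed.

Lemma split_sub (P Q X Y : seq (pt R)) a : ((X, Y) = (P, Q) \/ (X, Y) = (Q, P)) ->
  {subset X <= P ++ a :: Q} /\ {subset Y <= P ++ a :: Q}.
Proof.
by case=> -[-> ->]; split => x; rewrite !mem_cat inE => ->; rewrite ?orbT.
Qed.

Lemma match_span L C1 C2 E : convex_cycle L -> matching C1 C2 E ->
  {subset C1 <= L} -> {subset C2 <= L} ->
  forall u v, u \in C1 -> v \in C2 -> exists a b,
   [/\ (a, b) \in E, dist a b <= dist u v & dist u a + dist b v <= 2 * dist u v].
Proof.
move=> HL.
elim=> [C2'|C1'|P1 a Q1 P2 b Q2 X1 Y1 X2 Y2 E' E'' Hmin HX1 HX2 Hpos Hneg _ IH1 _ IH2] //.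
move=> s1 s2 u v uC vC.
have [sX1 sY1] := split_sub a HX1; have [sX2 sY2] := split_sub b HX2.
have aL : a \in L by apply: s1; rewrite mem_cat mem_head orbT.
have bL : b \in L by apply: s2; rewrite mem_cat mem_head orbT.
have uL := s1 _ uC; have vL := s2 _ vC.
have hab := Hmin _ _ uC vC.
have inE1 : forall g, g \in E' -> g \in (a, b) :: E' ++ E'' by move=> g h; rewrite inE mem_cat h orbT.
have inE2 : forall g, g \in E'' -> g \in (a, b) :: E' ++ E'' by move=> g h; rewrite inE mem_cat h !orbT.
have d0 := dist0 a; have d0' := dist0 b.
case: (split_mem HX1 uC) => [ua|[uX|uY]].
  exists a, b; split => //; first exact: mem_head.
  have := dist_tri b a v; rewrite (dist_sym b a); move: hab; rewrite ua dist0 add0r.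
  move=> hab htr; clear -hab htr; lra.
case: (split_mem HX2 vC) => [vb|[vX|vY]].
- exists a, b; split => //; first exact: mem_head.
  have := dist_tri u b a; rewrite (dist_sym b a); move: hab; rewrite vb dist0 addr0.
  move=> hab htr; clear -hab htr; lra.
- have [a' [b' [h1 h2 h3]]] := IH1 (fun x h => s1 _ (sX1 _ h)) (fun x h => s2 _ (sX2 _ h)) u v uX vX.
  by exists a', b'; split => //; apply: inE1.
- have ou : 0 < orient a b u by apply: Hpos; rewrite mem_cat uX.
  have ov : orient a b v < 0 by apply: Hneg; rewrite mem_cat vY orbT.
  have [c1 _] := crossing HL aL bL uL vL ou ov.
  exists a, b; split => //; first exact: mem_head.
  lra.
case: (split_mem HX2 vC) => [vb|[vX|vY]].
- exists a, b; split => //; first exact: mem_head.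
  have := dist_tri u b a; rewrite (dist_sym b a); move: hab; rewrite vb dist0 addr0.
  move=> hab htr; clear -hab htr; lra.
- have ou : orient a b u < 0 by apply: Hneg; rewrite mem_cat uY.
  have ov : 0 < orient a b v by apply: Hpos; rewrite mem_cat vX orbT.
  have [_ c2] := crossing HL aL bL vL uL ov ou.
  exists a, b; split => //; first exact: mem_head.
  move: c2; rewrite (dist_sym v b) (dist_sym a u) (dist_sym v u); lra.
- have [a' [b' [h1 h2 h3]]] := IH2 (fun x h => s1 _ (sY1 _ h)) (fun x h => s2 _ (sY2 _ h)) u v uY vY.
  by exists a', b'; split => //; apply: inE2.
Qed.


Lemma walk_cat u (p q : seq (pt R)) : walk_len u (p ++ q) = walk_len u p + walk_len (last u p) q.
Proof.
rewrite /walk_len; elim: p u => [|x p IH] u /=; first by rewrite big_nil add0r.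
by rewrite !big_cons IH addrA.
Qed.

Lemma walk1 a b (p : seq (pt R)) : walk_len a (b :: p) = dist a b + walk_len b p.
Proof. by rewrite /walk_len /= big_cons. Qed.

Lemma glue Es u a b v (p1 p2 : seq (pt R)) : path (adj Es) u p1 -> last u p1 = a -> adj Es a b ->
  path (adj Es) b p2 -> last b p2 = v ->
  [/\ path (adj Es) u (p1 ++ b :: p2), last u (p1 ++ b :: p2) = v &
      walk_len u (p1 ++ b :: p2) = walk_len u p1 + dist a b + walk_len b p2].
Proof.
move=> h1 h2 hab h3 h4; split.
- by rewrite cat_path h1 h2 /= hab h3.
- by rewrite last_cat /= h4.
- by rewrite walk_cat h2 walk1 addrA.
Qed.

Lemma adj_sym Es u v : adj Es u v = adj Es v u.
Proof. by rewrite /adj orbC. Qed.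

Lemma adj_sub (A B : seq (pt R * pt R)) u v : {subset A <= B} -> adj A u v -> adj B u v.
Proof. by move=> sAB /orP [h|h]; apply/orP; [left|right]; apply: sAB. Qed.

Lemma count_le_size (P : pred (pt R)) N s : uniq s -> (forall u, P u -> u \in N) ->
  (count P s <= size N)%N.
Proof.
move=> us hP; apply: (leq_trans (@sub_count _ P (mem N) _ s)).
  by move=> u /hP.
rewrite -size_filter; apply: uniq_leq_size; first exact: filter_uniq.
by move=> u; rewrite mem_filter => /andP [].
Qed.

Definition bnd (S : seq (pt R)) v : nat :=
  if v \in S then ((v != head v S) + (v != last v S))%N else 0%N.

Lemma chain_nbrs S v : uniq S -> exists N, (size N <= bnd S v)%N /\
  forall u, adj (chain_edges S) u v -> u \in N.
Proof.
elim: S => [|x [|y s] IH] /=.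
- by move=> _; exists [::].
- by move=> _; exists [::].
- move=> /andP [xn uys]; have [N' [sN' hN']] := IH uys.
  exists ((if v == y then [:: x] else [::]) ++ (if v == x then [:: y] else [::]) ++ N'); split.
  + rewrite /bnd /= !inE in sN' *.
    have xy : x != y by apply: contra xn => /eqP ->; rewrite inE eqxx.
    have xs : x \notin s by apply: contra xn => h; rewrite inE h orbT.
    case: (eqVneq v x) => [vx|vnx].
    * have vny : v != y by rewrite vx.
      rewrite vx (negbTE xy) (negbTE xs) /= in sN' *.
      have hl : x != last y s by apply: contra xn => /eqP ->; exact: mem_last.
      by rewrite hl; move: sN'; rewrite leqn0 => /eqP ->.
    * case: (eqVneq v y) => [vy|vny] /=.
      - rewrite vy eqxx /= in sN' *.
        by rewrite add1n ltnS; rewrite add0n in sN'.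
      - by rewrite (negbTE vny) /= in sN'.
  + move=> u; rewrite /adj !inE => /orP [/orP [/eqP [-> ->]|h]|/orP [/eqP [-> ->]|h]].
    * by rewrite eqxx mem_head.
    * by rewrite !mem_cat hN' ?orbT // /adj h.
    * by rewrite eqxx mem_cat /= ; case: (x == y) => /=; rewrite ?inE eqxx ?orbT.
    * by rewrite !mem_cat hN' ?orbT // /adj h orbT.
Qed.


Lemma disj (S1 S2 : seq (pt R)) x : uniq (S1 ++ S2) -> x \in S1 -> x \in S2 -> False.
Proof.
rewrite cat_uniq => /and3P [_ /hasPn H _] h1 h2.
by move: (H x h2); rewrite h1.
Qed.

Lemma not_endpoint (S : seq (pt R)) v : v \notin S -> is_endpoint S v = false.
Proof.
case: S => [|x s] //= vn; apply/negbTE; rewrite negb_or; apply/andP; split.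
- by apply: contra vn => /eqP ->; exact: mem_head.
- by apply: contra vn => /eqP ->; exact: (mem_last x s).
Qed.

Lemma match_nbrs (S1 S2 : seq (pt R)) E v : uniq (S1 ++ S2) -> matching S1 S2 E ->
  exists N : seq (pt R), (size N <= 1)%N /\ forall u, adj E u v -> u \in N.
Proof.
move=> U /match_props [hm hu _].
case: (Classical_Prop.classic (exists u, adj E u v)) => [[u0 h0]|hn]; last first.
  by exists [::]; split => // u h; exfalso; apply: hn; exists u.
exists [:: u0]; split => // u h; rewrite inE; apply/eqP.
move: h h0; rewrite /adj => /orP [h|h] /orP [h0|h0].
- by have := hu _ _ h h0 (or_intror erefl) => -[].
- by exfalso; apply: (disj U (hm _ h0).1 (hm _ h).2).
- by exfalso; apply: (disj U (hm _ h).1 (hm _ h0).2).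
- by have := hu _ _ h h0 (or_introl erefl) => -[].
Qed.

Lemma same_sym (e f : pt R * pt R) : same_edge e f -> same_edge f e.
Proof. by case: e => ??; case: f => ?? [[-> ->]|[-> ->]]; [left|right]. Qed.

Lemma hull_edge_plane L (e f : pt R * pt R) w : convex_cycle L ->
  e.1 \in L -> e.2 \in L -> (e.2 = next L e.1 \/ e.1 = next L e.2) ->
  f.1 \in L -> f.2 \in L -> f.1 != f.2 -> ~ same_edge e f ->
  on_seg w e -> on_seg w f -> ((w == e.1) || (w == e.2)) && ((w == f.1) || (w == f.2)).
Proof.
case: e => x y; case: f => y' z' /= HL xL yL hn y'L z'L ne nse we wf.
case: hn => hn.
- rewrite hn in we *; apply: (hull_ok HL xL y'L z'L ne) => // -[[h1 h2]|[h1 h2]]; apply: nse.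
  + by left; rewrite hn h1 h2.
  + by right; rewrite hn h1 h2.
- rewrite hn in we *; rewrite orbC.
  apply: (hull_ok HL yL y'L z'L ne) => //; last exact: on_seg_sym.
  move=> -[[h1 h2]|[h1 h2]]; apply: nse.
  + by right; rewrite hn h1 h2.
  + by left; rewrite hn h1 h2.
Qed.

End G.

Unset Implicit Arguments.

Theorem theorem2 (R : rcfType) (S1 S2 : seq (pt R)) (tau : R)
    (E : seq (pt R * pt R)) :
  uniq (S1 ++ S2) ->
  separated S1 S2 ->
  convex_position (S1 ++ S2) ->
  convex_chain S1 (S1 ++ S2) ->
  convex_chain S2 (S1 ++ S2) ->
  1 <= tau ->
  is_spanner S1 (chain_edges S1) tau ->
  is_spanner S2 (chain_edges S2) tau ->
  matching S1 S2 E ->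
  let Es := chain_edges S1 ++ chain_edges S2 ++ E in
  [/\ plane Es,
      is_spanner (S1 ++ S2) Es (2 * tau + 1) &
      forall v, v \in S1 ++ S2 ->
        (degree (S1 ++ S2) Es v <=
           (if is_endpoint S1 v || is_endpoint S2 v then 2 else 3))%N].
Proof.
move=> U _ [L [pL cL]] [L1 [pL1 cL1 iL1]] [L2 [pL2 cL2 iL2]] tau1 H1 H2 HM Es.
have U1 : uniq S1 by move: U; rewrite cat_uniq => /and3P [].
have U2 : uniq S2 by move: U; rewrite cat_uniq => /and3P [].
have [hm hu hp] := match_props HM.
have uL1 : uniq L1 by rewrite (perm_uniq pL1).
have uL2 : uniq L2 by rewrite (perm_uniq pL2).
have sA : {subset chain_edges S1 <= Es} by move=> g h; rewrite /Es mem_cat h.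
have sB : {subset chain_edges S2 <= Es} by move=> g h; rewrite /Es !mem_cat h orbT.
have sE : {subset E <= Es} by move=> g h; rewrite /Es !mem_cat h !orbT.
have facts : forall g, g \in Es -> [/\ g.1 \in S1 ++ S2, g.2 \in S1 ++ S2 & g.1 != g.2].
  move=> [p q]; rewrite /Es !mem_cat => /orP [h|/orP [h|h]] /=.
  - have [h1 h2] := chain_mem h; split; rewrite ?mem_cat ?h1 ?h2 //.
    exact: chain_neq U1 h.
  - have [h1 h2] := chain_mem h; split; rewrite ?mem_cat ?h1 ?h2 ?orbT //.
    exact: chain_neq U2 h.
  - have [h1 h2] := hm _ h; split; rewrite ?mem_cat ?h1 ?h2 ?orbT //=.
    by apply/eqP => epq; apply: (disj U h1); rewrite epq.
split.
-
  move=> e f eEs fEs nse w we wf.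
  have [e1 e2 ene] := facts e eEs; have [f1 f2 fne] := facts f fEs.
  move: (eEs); rewrite /Es !mem_cat => /orP [eA|/orP [eB|eE]].
  + have hn : e.2 = next L1 e.1 \/ e.1 = next L1 e.2 by case: e eA {eEs e1 e2 ene nse we} => p q /=; exact: chain_hull.
    by apply: (hull_edge_plane cL1) => //; rewrite (perm_mem pL1).
  + have hn : e.2 = next L2 e.1 \/ e.1 = next L2 e.2 by case: e eB {eEs e1 e2 ene nse we} => p q /=; exact: chain_hull.
    by apply: (hull_edge_plane cL2) => //; rewrite (perm_mem pL2).
  + move: (fEs); rewrite /Es !mem_cat => /orP [fA|/orP [fB|fE]].
    * have hn : f.2 = next L1 f.1 \/ f.1 = next L1 f.2 by case: f fA {fEs f1 f2 fne nse wf} => p q /=; exact: chain_hull.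
      rewrite andbC; apply: (hull_edge_plane cL1) => //; try by rewrite (perm_mem pL1).
      by move/same_sym.
    * have hn : f.2 = next L2 f.1 \/ f.1 = next L2 f.2 by case: f fB {fEs f1 f2 fne nse wf} => p q /=; exact: chain_hull.
      rewrite andbC; apply: (hull_edge_plane cL2) => //; try by rewrite (perm_mem pL2).
      by move/same_sym.
    * exfalso; apply: (hp e f w eE fE _ we wf) => ef; by apply: nse; left.
-
  have sL : forall x, x \in S1 ++ S2 -> x \in L by move=> x; rewrite (perm_mem pL).
  have sL1 : {subset S1 <= L} by move=> x h; apply: sL; rewrite mem_cat h.
  have sL2 : {subset S2 <= L} by move=> x h; apply: sL; rewrite mem_cat h orbT.
  have lift : forall A, {subset A <= Es} -> forall x (p : seq (pt R)), path (adj A) x p -> path (adj Es) x p.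
    by move=> A sAE x p; apply: sub_path => a b; apply: adj_sub.
  have tau0 : 0 <= tau by apply: le_trans tau1; apply: ler01.
  move=> u v; rewrite !mem_cat => /orP [uS|uS] /orP [vS|vS].
  + have [p [hp1 hp2 hp3]] := H1 u v uS vS.
    exists p; split => //; first exact: lift hp1.
    have := dist_ge0 u v; move: hp3; clear -tau0; nra.
  + have [a [b [abE hab hd]]] := match_span cL HM sL1 sL2 uS vS.
    have [aS bS] := hm _ abE.
    have [p1 [hp1 hl1 hw1]] := H1 u a uS aS.
    have [p2 [hp2 hl2 hw2]] := H2 b v bS vS.
    have [hq hlq hwq] := glue (lift _ sA _ _ hp1) hl1 (adj_sub sE (introT orP (or_introl abE))) (lift _ sB _ _ hp2) hl2.
    exists (p1 ++ b :: p2); split => //; rewrite hwq.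
    have := dist_ge0 u a; have := dist_ge0 b v.
    move: hw1 hw2 hab hd tau1; clear; nra.
  + have [a [b [abE hab hd]]] := match_span cL HM sL1 sL2 vS uS.
    have [aS bS] := hm _ abE.
    have [p1 [hp1 hl1 hw1]] := H2 u b uS bS.
    have [p2 [hp2 hl2 hw2]] := H1 a v aS vS.
    have hba : adj Es b a by rewrite adj_sym; apply: (adj_sub sE); rewrite /adj abE.
    have [hq hlq hwq] := glue (lift _ sB _ _ hp1) hl1 hba (lift _ sA _ _ hp2) hl2.
    exists (p1 ++ a :: p2); split => //; rewrite hwq.
    rewrite (dist_sym v a) (dist_sym b u) (dist_sym v u) (dist_sym a b) in hd hab.
    have := dist_ge0 u b; have := dist_ge0 a v.
    move: hw1 hw2 hab hd tau1; clear; nra.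
  + have [p [hp1 hp2 hp3]] := H2 u v uS vS.
    exists p; split => //; first exact: lift hp1.
    have := dist_ge0 u v; move: hp3; clear -tau0; nra.
-
  move=> v vS.
  have [N1 [s1 h1]] := chain_nbrs v U1.
  have [N2 [s2 h2]] := chain_nbrs v U2.
  have [N3 [s3 h3]] := match_nbrs v U HM.
  rewrite /degree.
  have key : (count (fun u => (u != v) && adj Es u v) (undup (S1 ++ S2)) <= size (N1 ++ N2 ++ N3))%N.
    apply: count_le_size; first exact: undup_uniq.
    move=> u /andP [_]; rewrite /adj /Es !mem_cat => /orP [/orP [h|/orP [h|h]]|/orP [h|/orP [h|h]]].
    - by rewrite (h1 u) // /adj h.
    - by rewrite (h2 u) ?orbT // /adj h.
    - by rewrite (h3 u) ?orbT // /adj h.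
    - by rewrite (h1 u) // /adj h orbT.
    - by rewrite (h2 u) ?orbT // /adj h orbT.
    - by rewrite (h3 u) ?orbT // /adj h orbT.
  apply: (leq_trans key).
  rewrite !size_cat.
  move: vS; rewrite mem_cat => /orP [vS|vS].
  + have vn : v \notin S2 by apply/negP => h; apply: (disj U vS h).
    rewrite (not_endpoint vn) orbF /is_endpoint.
    have -> : (S1 != [::]) by case: (S1) vS.
    move: s1 s2; rewrite /bnd vS (negbTE vn) leqn0 => s1 /eqP ->.
    move: s1 s3; move: (size N1) (size N3) => n1 n3.
    by case: (v == head v S1); case: (v == last v S1) => /= ha hb; move: ha hb; clear; lia.
  + have vn : v \notin S1 by apply/negP => h; apply: (disj U h vS).
    rewrite (not_endpoint vn) /is_endpoint.
    have -> : (S2 != [::]) by case: (S2) vS.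
    move: s1 s2; rewrite /bnd vS (negbTE vn) leqn0 => /eqP -> s2.
    move: s2 s3; move: (size N2) (size N3) => n2 n3.
    by case: (v == head v S2); case: (v == last v S2) => /= ha hb; move: ha hb; clear; lia.
Qed.
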